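(* Let $\mathbf{S}=(S_n:n\ge1)\sim L(2,2,p)$ with $p=\sqrt2-1$, and let $x$ be a positive integer. Then $$\mathbb{P}(S_n\ge x\text{ for some }n\ge1)=\mathbb{P}(S_n\le -x\text{ for some }n\ge1)=1.$$
   Context: Ladder chain: let $\xi_1,\xi_2,\dots$ be i.i.d. with values in $\{1,-1\}$, $\mathbb{P}(\xi_i=1)=p$, $\mathbb{P}(\xi_i=-1)=1-p$, and let $r,s$ be positive integers. Define $X_k=-1$ if $\xi_k=-1$; $X_k=s$ if $k\ge r$ and $\xi_k=\xi_{k-1}=\dots=\xi_{k-r+1}=1$; and $X_k=1$ otherwise. Let $S_n=X_1+\dots+X_n$. The process $\mathbf{S}=(S_n:n\ge1)$ is called a ladder chain of order $r$, step $s$ and probability $p$, written $\mathbf{S}\sim L(r,s,p)$. Thus for $L(2,2,p)$: $X_k=-1$ if $\xi_k=-1$, $X_k=2$ if $\xi_k=\xi_{k-1}=1$ ($k\ge2$), and $X_k=1$ otherwise. *)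

(* Defs.v *)
From HB Require Import structures.
From mathcomp Require Import all_boot all_order all_algebra.
From mathcomp Require Import all_classical all_reals all_analysis.
Set Implicit Arguments. Unset Strict Implicit. Unset Printing Implicit Defensive.
Import Order.TTheory GRing.Theory Num.Theory.
Local Open Scope classical_set_scope.
Local Open Scope ring_scope.

(* Indices are 0-based: xi k here is the paper's xi_{k+1}. *)

(** Mutual independence of a sequence of real random variables:
    for every n and every measurable B_0,...,B_{n-1},
    P(xi_0 in B_0, ..., xi_{n-1} in B_{n-1}) = prod_i P(xi_i in B_i).
    (Taking B_i = setT recovers every finite subfamily.) *)
Definition mutually_independent_seq {d} {T : measurableType d} {R : realType}
    (P : probability T R) (xi : nat -> T -> R) : Prop :=
  forall (n : nat) (B : nat -> set R),
    (forall i, measurable (B i)) ->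
    P (\bigcap_(i in [set i | (i < n)%N]) (xi i @^-1` B i)) =
    (\prod_(i < n) P (xi i @^-1` B i))%E.

Definition iid_pm1 {d} {T : measurableType d} {R : realType}
    (P : probability T R) (p : R) (xi : nat -> T -> R) : Prop :=
  [/\ (forall i, measurable_fun setT (xi i)),
      (forall i t, xi i t = 1 \/ xi i t = -1),
      (forall i, P (xi i @^-1` [set 1]) = p%:E) &
      mutually_independent_seq P xi].

Definition ladder_step {T : Type} {R : realType} (r s : nat)
    (xi : nat -> T -> R) (k : nat) (t : T) : R :=
  if xi k t == -1 then -1
  else if ((r <= k.+1)%N && [forall j : 'I_r, xi (k - j)%N t == 1]) then s%:R
  else 1.

Definition ladder_sum {T : Type} {R : realType} (r s : nat)
    (xi : nat -> T -> R) (n : nat) (t : T) : R :=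
  \sum_(k < n) ladder_step r s xi k t.

(* Main.v *)
Require Import Defs.
From HB Require Import structures.
From mathcomp Require Import all_boot all_order all_algebra.
From mathcomp Require Import all_classical all_reals all_analysis.
From mathcomp Require Import ring lra.
Import Order.TTheory GRing.Theory Num.Theory.
Local Open Scope classical_set_scope.
Local Open Scope ring_scope.

Definition stp {R : realType} (z : R * bool) (c : bool) : R * bool :=
  (z.1 + (if c then (if z.2 then 2 else 1) else -1), c).
Definition walk {R : realType} (z : R * bool) (w : seq bool) := foldl (@stp R) z w.
Definition activ {R : realType} (a b : R) (z : R * bool) : bool := (- a < z.1) && (z.1 < b).
Fixpoint swalk {R : realType} (a b : R) (z : R * bool) (w : seq bool) : R * bool :=
  match w with [::] => z | c :: w' => if activ a b z then swalk a b (stp z c) w' else z end.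
Fixpoint Ex {R : realType} (p : R) (N : nat) (f : seq bool -> R) : R :=
  match N with
  | 0 => f [::]
  | N'.+1 => p * Ex p N' (fun w => f (true :: w)) + (1 - p) * Ex p N' (fun w => f (false :: w))
  end.
Definition Vf {R : realType} (p : R) (z : R * bool) := z.1 + (if z.2 then p else 0).

Lemma Ex_const {R : realType} (p : R) N c : Ex p N (fun _ => c) = c.
Proof. elim: N => [|N IH] //=; rewrite IH; ring. Qed.

Lemma Ex_ler {R : realType} (p : R) N f g : 0 <= p <= 1 ->
  (forall w, f w <= g w) -> Ex p N f <= Ex p N g.
Proof.
move=> /andP[p0 p1]; elim: N f g => [|N IH] f g fg //=.
apply: lerD; apply: ler_wpM2l; rewrite ?subr_ge0 //; exact: IH.
Qed.

Lemma Ex_add {R : realType} (p : R) N f g :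
  Ex p N (fun w => f w + g w) = Ex p N f + Ex p N g.
Proof. elim: N f g => [|N IH] f g //=; rewrite !IH; ring. Qed.

Lemma Ex_scale {R : realType} (p : R) N c f :
  Ex p N (fun w => c * f w) = c * Ex p N f.
Proof. elim: N f => [|N IH] f //=; rewrite !IH; ring. Qed.

Lemma swalk_inact {R : realType} (a b : R) z w : ~~ activ a b z -> swalk a b z w = z.
Proof. by case: w => [|c w] //= /negbTE ->. Qed.

Lemma Ex_mart {R : realType} (p a b : R) N z : p ^+ 2 + 2 * p - 1 = 0 ->
  Ex p N (fun w => Vf p (swalk a b z w)) = Vf p z.
Proof.
move=> hp; elim: N z => [|N IH] z //=.
case: (activ a b z).
  rewrite !IH /Vf /stp /=; case: z.2; lra.
by rewrite !Ex_const; ring.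
Qed.

Definition actf {R : realType} (a b : R) (z : R * bool) : R := if activ a b z then 1 else 0.

Lemma Ex_quad {R : realType} (p a b : R) N z : p ^+ 2 + 2 * p - 1 = 0 -> 0 <= p <= 1 ->
  Vf p z ^+ 2 + N%:R * Ex p N (fun w => actf a b (swalk a b z w))
   <= Ex p N (fun w => Vf p (swalk a b z w) ^+ 2).
Proof.
move=> hp hp01; elim: N z => [|N IH] z /=; first by rewrite mul0r addr0.
case ha: (activ a b z); last first.
  by rewrite !Ex_const /actf ha; lra.
have A1 : Ex p N (fun w => actf a b (swalk a b (stp z true) w)) <= 1.
  rewrite -[X in _ <= X](Ex_const p N 1); apply: Ex_ler => // w; rewrite /actf; case: ifP; lra.
have A2 : Ex p N (fun w => actf a b (swalk a b (stp z false) w)) <= 1.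
  rewrite -[X in _ <= X](Ex_const p N 1); apply: Ex_ler => // w; rewrite /actf; case: ifP; lra.
have I1 := IH (stp z true); have I2 := IH (stp z false).
have key : Vf p z ^+ 2 + 1 <= p * Vf p (stp z true) ^+ 2 + (1 - p) * Vf p (stp z false) ^+ 2.
  clear ha I1 I2 A1 A2 IH; case: z => x s; rewrite /Vf /stp /=.
  have h1 : x * (p ^+ 2 + 2 * p - 1) = 0 by rewrite hp mulr0.
  have h2 : p * (p ^+ 2 + 2 * p - 1) = 0 by rewrite hp mulr0.
  case: s; nra.
move: hp01 => /andP[p0 p1].
set e1 := Ex p N (fun w => actf a b (swalk a b (stp z true) w)) in A1 I1 *.
set e2 := Ex p N (fun w => actf a b (swalk a b (stp z false) w)) in A2 I2 *.
set q1 := Ex p N (fun w => Vf p (swalk a b (stp z true) w) ^+ 2) in I1 *.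
set q2 := Ex p N (fun w => Vf p (swalk a b (stp z false) w) ^+ 2) in I2 *.
rewrite -natr1.
have hN : 0 <= (N%:R : R) by [].
nra.
Qed.

Lemma swalk_inv {R : realType} (a b : R) z w : -a - 1 < z.1 < b + 2 ->
  -a - 1 < (swalk a b z w).1 < b + 2.
Proof.
elim: w z => [|c w IH] z //= hz.
case ha: (activ a b z) => //; apply: IH.
move: ha; rewrite /activ /stp /= => /andP[h1 h2].
case: c; case: z.2 in h1 h2 *; apply/andP; split; lra.
Qed.

Lemma swalk_walk {R : realType} (a b : R) z w :
  exists n, (n <= size w)%N /\ swalk a b z w = walk z (take n w).
Proof.
elim: w z => [|c w IH] z /=; first by exists 0%N.
case: (activ a b z); last by exists 0%N.
have [n [hn ->]] := IH (stp z c).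
by exists n.+1.
Qed.

Definition z0 {R : realType} : R * bool := (0, false).

Lemma disc_bounds {R : realType} (p a b : R) N :
  p ^+ 2 + 2 * p - 1 = 0 -> 0 <= p <= 1 -> 0 < a -> 0 < b ->
  let top := fun w => if b <= (swalk a b z0 w).1 then 1 else 0 in
  let bot := fun w => if (swalk a b z0 w).1 <= -a then 1 else 0 in
  let act := fun w => actf a b (swalk a b z0 w) in
  [/\ a * Ex p N bot <= b + 3, b * Ex p N top <= a + 1,
      N%:R * Ex p N act <= (a + b + 3) ^+ 2 &
      Ex p N top + Ex p N bot + Ex p N act = 1].
Proof.
move=> hp hp01 a0 b0 top bot act.
have inv w : -a - 1 < (swalk a b z0 w).1 < b + 2.
  by apply: swalk_inv; rewrite /z0 /=; apply/andP; split; lra.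
have M := Ex_mart p a b N z0 hp.
have V0 : Vf p (@z0 R) = 0 by rewrite /Vf /z0 /=; rewrite addr0.
rewrite V0 in M.
have [p0 p1] : 0 <= p /\ p <= 1 by move/andP: hp01.
have Vb w : 0 <= Vf p (swalk a b z0 w) - (swalk a b z0 w).1 <= p.
  rewrite /Vf; case: (swalk a b z0 w).2; apply/andP; split; lra.
split.
- have H : forall w, Vf p (swalk a b z0 w) <= (b + 2 + p) + (- (a + b + 2)) * bot w.
    move=> w; have := inv w; have := Vb w; rewrite /bot.
    case: ifP => hb; rewrite /= => /andP[h1 h2] /andP[h3 h4]; lra.
  have E0 : 0 <= Ex p N bot.
    rewrite -(Ex_const p N 0); apply: Ex_ler => // w; rewrite /bot; case: ifP => _; lra.
  have := Ex_ler p N _ _ hp01 H; rewrite M Ex_add Ex_const Ex_scale; nra.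
- have H : forall w, (- a - 1) + (a + b + 1) * top w <= Vf p (swalk a b z0 w).
    move=> w; have := inv w; have := Vb w; rewrite /top.
    case: ifP => hb; rewrite /= => /andP[h1 h2] /andP[h3 h4]; lra.
  have E0 : 0 <= Ex p N top.
    rewrite -(Ex_const p N 0); apply: Ex_ler => // w; rewrite /top; case: ifP => _; lra.
  have := Ex_ler p N _ _ hp01 H; rewrite M Ex_add Ex_const Ex_scale; nra.
- have Q := Ex_quad p a b N z0 hp hp01; rewrite V0 expr0n /= add0r in Q.
  apply: (le_trans Q); rewrite -[X in _ <= X](Ex_const p N); apply: Ex_ler => // w.
  have := inv w; have := Vb w; move=> /andP[h1 h2] /andP[h3 h4].
  set v := Vf p _ in h1 h2 *; set u := (swalk a b z0 w).1 in h1 h2 h3 h4.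
  have hv1 : v <= a + b + 3 by lra.
  have hv2 : - (a + b + 3) <= v by lra.
  nra.
- rewrite -!Ex_add -[X in _ = X](Ex_const p N 1); congr Ex; apply: funext => w.
  rewrite /top /bot /act /actf /activ.
  set u := (swalk a b z0 w).1.
  case: (lerP b u) => h1; case: (lerP u (-a)) => h2 /=; try lra.
Qed.


Definition word {T : Type} {R : realType} (xi : nat -> T -> R) (N : nat) (t : T) : seq bool :=
  [seq (xi i t == 1) | i <- iota 0 N].

Fixpoint words (N : nat) : seq (seq bool) :=
  match N with
  | 0 => [:: [::]]
  | N'.+1 => [seq true :: w | w <- words N'] ++ [seq false :: w | w <- words N']
  end.

Definition mu {R : realType} (p : R) (w : seq bool) : R :=
  \prod_(c <- w) (if c then p else 1 - p).

Lemma Ex_words {R : realType} (p : R) N f :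
  Ex p N f = \sum_(w <- words N) mu p w * f w.
Proof.
elim: N f => [|N IH] f /=; first by rewrite big_seq1 /mu big_nil mul1r.
rewrite big_cat !big_map /= !IH !mulr_sumr; congr (_ + _); apply: eq_bigr => w _;
  rewrite /mu big_cons /=; ring.
Qed.

Lemma words_uniq N : uniq (words N).
Proof.
elim: N => [|N IH] //=; rewrite cat_uniq !map_inj_uniq //=; last by move=> ? ? [].
  rewrite IH andbT; apply/hasPn => w /mapP [v _ ->]; apply/mapP => [[u _]] //.
by move=> ? ? [].
Qed.

Lemma mem_words N w : size w = N -> w \in words N.
Proof.
elim: N w => [|N IH] [|c w] //= [hs]; rewrite mem_cat; case: c.
  by rewrite map_f // IH.
by rewrite orbC map_f // IH.
Qed.

Lemma size_word {T : Type} {R : realType} (xi : nat -> T -> R) N t : size (word xi N t) = N.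
Proof. by rewrite size_map size_iota. Qed.

Lemma pm1_ne : forall (R : realType), (-1 : R) != 1.
Proof. move=> R; apply/eqP => h; have : (-1 : R) < 1 by lra. by rewrite h ltxx. Qed.

Lemma cyl_eq {T : Type} {R : realType} (xi : nat -> T -> R) N w :
  (forall i t, xi i t = 1 \/ xi i t = -1) -> size w = N ->
  [set t | word xi N t = w] =
  \bigcap_(i in [set i | (i < N)%N]) (xi i @^-1` [set (if nth false w i then 1 else -1)]).
Proof.
move=> hpm hs; apply/seteqP; split => t /=.
- move=> hw i /= hi; rewrite -hw /word (nth_map 0%N) ?size_iota // nth_iota // add0n.
  by case: (hpm i t) => ->; rewrite ?eqxx // (negbTE (pm1_ne R)).
- move=> H; apply: (@eq_from_nth _ false); first by rewrite size_word hs.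
  move=> i; rewrite size_word => hi.
  rewrite /word (nth_map 0%N) ?size_iota // nth_iota // add0n.
  rewrite (H i hi); case: (nth false w i); rewrite ?eqxx //.
  exact: negbTE (pm1_ne R).
Qed.

Lemma pre_meas {d} {T : measurableType d} {R : realType} (xi : nat -> T -> R) i (r : R) :
  (forall i, measurable_fun setT (xi i)) -> measurable (xi i @^-1` [set r]).
Proof. by move=> hm; rewrite -(setTI (_ @^-1` _)); apply: hm => //; exact: measurable_set1. Qed.

Lemma cyl_meas {d} {T : measurableType d} {R : realType} (xi : nat -> T -> R) N w :
  (forall i, measurable_fun setT (xi i)) ->
  (forall i t, xi i t = 1 \/ xi i t = -1) -> size w = N ->
  measurable [set t | word xi N t = w].
Proof.
move=> hm hpm hs; rewrite (cyl_eq _ _ _ hpm hs); apply: bigcap_measurableType => k _.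
exact: pre_meas.
Qed.

Lemma cyl_prob {d} {T : measurableType d} {R : realType} (P : probability T R) (p : R)
    (xi : nat -> T -> R) N w :
  iid_pm1 P p xi -> size w = N ->
  P [set t | word xi N t = w] = (mu p w)%:E.
Proof.
case=> hm hpm hp hind hs; rewrite (cyl_eq _ _ _ hpm hs) hind; last first.
  by move=> i; exact: measurable_set1.
have H1 i : P (xi i @^-1` [set (if nth false w i then 1 else -1)]) =
   (if nth false w i then p else 1 - p)%:E.
  case: (nth false w i); first exact: hp.
  have -> : xi i @^-1` [set -1] = ~` (xi i @^-1` [set 1]).
    apply/seteqP; split => t /=.
      by move=> ->; apply/eqP; exact: pm1_ne.
    by case: (hpm i t).
  by rewrite probability_setC ?hp ?EFinB //; exact: pre_meas.
under eq_bigr => i _ do rewrite H1. rewrite prodEFin /mu (big_nth false) big_mkord hs.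
by [].
Qed.

Lemma list_prob {d} {T : measurableType d} {R : realType} (P : probability T R) (p : R)
    (xi : nat -> T -> R) N (ws : seq (seq bool)) :
  iid_pm1 P p xi -> uniq ws -> all (fun w => size w == N) ws ->
  measurable [set t | word xi N t \in ws] /\
  P [set t | word xi N t \in ws] = (\sum_(w <- ws) mu p w)%:E.
Proof.
move=> hiid; have [hm hpm _ _] := hiid.
elim: ws => [|w ws IH] /=.
  move=> _ _; rewrite big_nil.
  have -> : [set t | word xi N t \in [::]] = set0 by apply/seteqP; split => t.
  by rewrite measure0.
move=> /andP[hw hu] /andP[/eqP hs ha]; have [m1 e1] := IH hu ha.
have E : [set t | word xi N t \in w :: ws] = [set t | word xi N t = w] `|` [set t | word xi N t \in ws].
  apply/seteqP; split => t /=; rewrite in_cons.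
    by case/orP => [/eqP ->|->]; [left|right].
  by case => [->|->]; rewrite ?eqxx ?orbT.
have mc := cyl_meas _ _ _ hm hpm hs.
rewrite E; split; first exact: measurableU.
rewrite measureU //; last first.
  apply/seteqP; split => t //= [h1 h2]; move: hw; rewrite -h1 h2 //.
transitivity ((mu p w)%:E + (\sum_(w0 <- ws) mu p w0)%:E)%E; last by rewrite big_cons EFinD.
congr (_ + _)%E; [exact: (cyl_prob _ _ _ _ _ hiid hs) | exact: e1].
Qed.

Lemma event_prob {d} {T : measurableType d} {R : realType} (P : probability T R) (p : R)
    (xi : nat -> T -> R) N (g : seq bool -> bool) :
  iid_pm1 P p xi ->
  measurable [set t | g (word xi N t)] /\
  P [set t | g (word xi N t)] = (Ex p N (fun w => if g w then 1 else 0))%:E.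
Proof.
move=> hiid.
have E : [set t | g (word xi N t)] = [set t | word xi N t \in [seq w <- words N | g w]].
  apply/seteqP; split => t /=; rewrite mem_filter ?mem_words ?size_word ?andbT //.
have hall : all (fun w => size w == N) [seq w <- words N | g w].
  apply/allP => w; rewrite mem_filter => /andP[_].
  elim: N w {E} => [|N IH] w /=; first by rewrite inE => /eqP ->.
  by rewrite mem_cat => /orP[] /mapP [v /IH /eqP hv ->] /=; rewrite hv.
have [m e] := list_prob _ _ _ N [seq w <- words N | g w] hiid (filter_uniq _ (words_uniq N)) hall.
rewrite E; split => //; rewrite e Ex_words big_filter big_mkcond /=.
congr (_%:E); apply: eq_bigr => w _; case: (g w); rewrite ?mulr1 ?mulr0 //.
Qed.

Lemma walk_word {T : Type} {R : realType} (xi : nat -> T -> R) n t :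
  (forall i t, xi i t = 1 \/ xi i t = -1) ->
  walk z0 (word xi n t) = (ladder_sum 2 2 xi n t, if n is n'.+1 then xi n' t == 1 else false).
Proof.
move=> hpm; elim: n => [|n IH].
  by rewrite /ladder_sum big_ord0.
rewrite /word -addn1 iotaD map_cat cats1 /walk foldl_rcons -/(word xi n t) -/(walk _ _) IH.
rewrite /ladder_sum addn1 big_ord_recr /= -/(ladder_sum 2 2 xi n t); congr pair; congr (_ + _).
have h1m : ((1:R) == -1) = false by rewrite eq_sym; exact: negbTE (pm1_ne R).
rewrite /ladder_step; case: (hpm n t) => hn; rewrite hn; last by rewrite !eqxx (negbTE (pm1_ne R)).
rewrite eqxx h1m /=.
case: n IH hn => [|n] IH hn //=.
have -> : [forall j : 'I_2, xi (n.+1 - j)%N t == 1] = (xi n.+1 t == 1) && (xi n t == 1).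
  apply/forallP/andP.
    move=> h; split; first exact: (h ord0).
    by have := h (Ordinal (isT : (1 < 2)%N)); rewrite /= subSS subn0.
  case=> h1 h2 [[|[|j]]] //= _.
  by rewrite subn1.
by rewrite hn eqxx.
Qed.

Lemma take_word {T : Type} {R : realType} (xi : nat -> T -> R) N n t :
  (n <= N)%N -> take n (word xi N t) = word xi n t.
Proof. by move=> h; rewrite /word -map_take take_iota (minn_idPl h). Qed.

Lemma reach_sub {T : Type} {R : realType} (a b : R) (xi : nat -> T -> R) N t (c : R -> bool) :
  (forall i t, xi i t = 1 \/ xi i t = -1) -> c 0 = false ->
  c (swalk a b z0 (word xi N t)).1 -> exists2 n, (0 < n)%N & c (ladder_sum 2 2 xi n t).
Proof.
move=> hpm c0; have [n [hn ->]] := swalk_walk a b z0 (word xi N t).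
rewrite size_word in hn; rewrite take_word // walk_word //=.
case: n {hn} => [|n] /=; first by rewrite /ladder_sum big_ord0 c0.
by exists n.+1.
Qed.

Lemma finish {d} {T : measurableType d} {R : realType} (P : probability T R) (U : set T) :
  measurable U -> (forall e : R, 0 < e -> ((1 - e)%:E <= P U)%E) -> P U = 1%E.
Proof.
move=> mU H; have H1 := probability_le1 P mU.
move: H H1; case: (P U) => [r | | ] H H1.
- congr (_%:E); apply/le_anti/andP; split; first by rewrite -lee_fin.
  apply/ler_addgt0Pr => e e0; have := H e e0; rewrite lee_fin; lra.
- by [].
- by have := H 1 ltr01.
Qed.

Lemma big_nat_above {R : realType} (y : R) : exists N : nat, y < N%:R /\ (0 < N)%N.
Proof.
have [y0|y0] := lerP 0 y.
  by exists (Num.Def.archi_bound y).+1; split => //; rewrite -natr1; have := archi_boundP y0; lra.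
by exists 1%N; split => //; lra.
Qed.

Theorem theorem4p3 (d : measure_display) (T : measurableType d) (R : realType)
    (P : probability T R) (xi : nat -> T -> R) (x : nat) :
  iid_pm1 P (Num.sqrt 2 - 1) xi ->
  (0 < x)%N ->
  P (\bigcup_(n in [set n | (0 < n)%N]) [set t | x%:R <= ladder_sum 2 2 xi n t]) = 1%E /\
  P (\bigcup_(n in [set n | (0 < n)%N]) [set t | ladder_sum 2 2 xi n t <= - x%:R]) = 1%E.
Proof.
move=> hiid x0.
have [hm hpm _ _] := hiid.
set p := Num.sqrt 2 - 1 in hiid *.
have s0 : 0 <= Num.sqrt (2:R) := sqrtr_ge0 _.
have s2 : Num.sqrt (2:R) ^+ 2 = 2 by rewrite sqr_sqrtr // ler0n.
have hp : p ^+ 2 + 2 * p - 1 = 0 by rewrite /p; nra.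
have hp01 : 0 <= p <= 1 by rewrite /p; apply/andP; split; nra.
have xpos : (0 : R) < x%:R by rewrite ltr0n.
have evS : forall (c : R -> bool) n, measurable [set t | c (ladder_sum 2 2 xi n t)].
  move=> c n; have [m _] := event_prob P p xi n (fun w => c (walk z0 w).1) hiid.
  have -> : [set t | c (ladder_sum 2 2 xi n t)] = [set t | c (walk z0 (word xi n t)).1].
    by apply/seteqP; split => t /=; rewrite walk_word.
  exact: m.
split.
- apply: finish; first by apply: bigcup_measurable => k _; exact: (evS (fun u => x%:R <= u) k).
  move=> e e0.
  have [na [ha na0]] := big_nat_above (2 * (x%:R + 3) / e).
  set a : R := na%:R in ha.
  have a0 : 0 < a by rewrite /a ltr0n.
  have ae : 2 * (x%:R + 3) < a * e.
    by rewrite -ltr_pdivrMr.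
  have [N [hN _]] := big_nat_above (2 * (a + x%:R + 3) ^+ 2 / e).
  have Ne : 2 * (a + x%:R + 3) ^+ 2 < N%:R * e by rewrite -ltr_pdivrMr.
  have := disc_bounds p a x%:R N hp hp01 a0 xpos.
  move=> /= [B1 B2 B3 B4].
  have [mE eE] := event_prob P p xi N (fun w => x%:R <= (swalk a x%:R z0 w).1) hiid.
  apply: (@le_trans _ _ (P [set t | x%:R <= (swalk a x%:R z0 (word xi N t)).1])).
    rewrite eE lee_fin.
    set Et := Ex p N _ in B2 B4 *.
    set Eb := Ex p N _ in B1 B4.
    set Ea := Ex p N _ in B3 B4.
    have hb : Eb < e / 2 by nra.
    have hA : Ea < e / 2.
      have N0 : (0 : R) <= N%:R by [].
      nra.
    lra.
  apply: (le_measure P); rewrite ?inE //.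
    by apply: bigcup_measurable => k _; exact: (evS (fun u => x%:R <= u) k).
  have c0 : (x%:R <= (0:R)) = false by apply/negbTE; rewrite -ltNge.
  move=> t /= h; have [n n0 hn] := reach_sub a x%:R xi N t (fun u => x%:R <= u) hpm c0 h.
  by exists n.
- apply: finish; first by apply: bigcup_measurable => k _; exact: (evS (fun u => u <= - x%:R) k).
  move=> e e0.
  have [nb [hb nb0]] := big_nat_above (2 * (x%:R + 1) / e).
  set b : R := nb%:R in hb.
  have b0 : 0 < b by rewrite /b ltr0n.
  have be : 2 * (x%:R + 1) < b * e.
    by rewrite -ltr_pdivrMr.
  have [N [hN _]] := big_nat_above (2 * (x%:R + b + 3) ^+ 2 / e).
  have Ne : 2 * (x%:R + b + 3) ^+ 2 < N%:R * e by rewrite -ltr_pdivrMr.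
  have := disc_bounds p x%:R b N hp hp01 xpos b0.
  move=> /= [B1 B2 B3 B4].
  have [mE eE] := event_prob P p xi N (fun w => (swalk x%:R b z0 w).1 <= - x%:R) hiid.
  apply: (@le_trans _ _ (P [set t | (swalk x%:R b z0 (word xi N t)).1 <= - x%:R])).
    rewrite eE lee_fin.
    set Et := Ex p N _ in B2 B4.
    set Eb := Ex p N _ in B1 B4 *.
    set Ea := Ex p N _ in B3 B4.
    have ht : Et < e / 2 by nra.
    have hA : Ea < e / 2.
      have N0 : (0 : R) <= N%:R by [].
      nra.
    lra.
  apply: (le_measure P); rewrite ?inE //.
    by apply: bigcup_measurable => k _; exact: (evS (fun u => u <= - x%:R) k).
  have c0 : ((0:R) <= - x%:R) = false by apply/negbTE; rewrite -ltNge; lra.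
  move=> t /= h; have [n n0 hn] := reach_sub x%:R b xi N t (fun u => u <= - x%:R) hpm c0 h.
  by exists n.
Qed.
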